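(* Let $k\ge 1$, $H>0$, $\beta>0$, $h>0$, and consider a hierarchical-leadership flock $[0,1,\dots,k]$ with leader sets $\mathcal{L}(i)\subseteq\{0,\dots,i-1\}$, $\mathcal{L}(i)\neq\varnothing$ for $i\ge 1$. Let $\tilde x_0[n],\dots,\tilde x_k[n]\in\mathbb{R}^3$ ($n=0,1,2,\dots$) be positions, and for $j\in\mathcal{L}(i)$ set \[a_{ij}[n]=\frac{H}{\left(1+|\tilde x_j[n]-\tilde x_i[n]|^2/2\right)^{\beta}},\] and $a_{ij}[n]=0$ for $j\notin\mathcal{L}(i)$. Let $d_i[n]=\sum_{j\in\mathcal{L}(i)}a_{ij}[n]$ for $i\ge 1$, and let $L_n$ be the $k\times k$ matrix (indices $1,\dots,k$) with $(L_n)_{ii}=d_i[n]$, $(L_n)_{ij}=-a_{ij}[n]$ for $1\le j<i$, and $(L_n)_{ij}=0$ for $j>i$. Let $S[n]=I-hL_n$. Suppose that there is a constant $B\ge 0$ such that the reduced position vector $x[n]=(\tilde x_1[n]-\tilde x_0[n],\dots,\tilde x_k[n]-\tilde x_0[n])\in\mathbb{R}^{3k}$ satisfies $|x[n]|^2\le B$ for all $n\ge 0$, and set $d_\ast=H/(1+B)^{\beta}$. If $0<h<\frac{1}{2kH}$, then for all $n\ge 0$ every entry of $S[n]$ is nonnegative and \[\max_{i,j}S_{ij}[n]\le 1-hd_\ast=:\rho_h.\]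
   Context: A flock is under hierarchical leadership (HL) if its agents can be labeled $0,1,\dots,k$ so that agent $i$ is influenced by agent $j$ (i.e. $a_{ij}>0$) only if $j<i$, and every agent $i>0$ has a nonempty leader set $\mathcal{L}(i)=\{j: a_{ij}>0\}$. *)

(* Defs.v *)
From HB Require Import structures.
From mathcomp Require Import all_boot all_order all_algebra.
From mathcomp Require Import all_classical all_reals all_analysis.
Set Implicit Arguments. Unset Strict Implicit. Unset Printing Implicit Defensive.
Import Order.TTheory GRing.Theory Num.Theory.
Local Open Scope ring_scope.

Definition sqnorm3 {R : realType} (v : 'rV[R]_3) : R := \sum_(c < 3) v 0 c ^+ 2.

Definition hier_leaders (k : nat) (L : 'I_k.+1 -> {set 'I_k.+1}) : Prop :=
  (forall i j : 'I_k.+1, j \in L i -> (j < i)%N) /\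
  (forall i : 'I_k.+1, (0 < i)%N -> L i != finset.set0).

Definition aw {R : realType} (k : nat) (L : 'I_k.+1 -> {set 'I_k.+1})
  (H beta : R) (xt : 'I_k.+1 -> 'rV[R]_3) (i j : 'I_k.+1) : R :=
  if j \in L i then H / (1 + sqnorm3 (xt j - xt i) / 2) `^ beta else 0.

Definition dw {R : realType} (k : nat) (L : 'I_k.+1 -> {set 'I_k.+1})
  (H beta : R) (xt : 'I_k.+1 -> 'rV[R]_3) (i : 'I_k.+1) : R :=
  \sum_(j in L i) aw L H beta xt i j.

(* L_n, indexed by 1..k (row/column i : 'I_k stands for agent i+1) *)
Definition Lmat {R : realType} (k : nat) (L : 'I_k.+1 -> {set 'I_k.+1})
  (H beta : R) (xt : 'I_k.+1 -> 'rV[R]_3) : 'M[R]_k :=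
  \matrix_(i < k, j < k)
    if i == j then dw L H beta xt (lift ord0 i)
    else if (j < i)%N then - aw L H beta xt (lift ord0 i) (lift ord0 j)
    else 0.

Definition Smat {R : realType} (k : nat) (L : 'I_k.+1 -> {set 'I_k.+1})
  (H beta h : R) (xt : 'I_k.+1 -> 'rV[R]_3) : 'M[R]_k :=
  1%:M - h *: Lmat L H beta xt.

Definition reduced_sqnorm {R : realType} (k : nat) (xt : 'I_k.+1 -> 'rV[R]_3) : R :=
  \sum_(i < k) sqnorm3 (xt (lift ord0 i) - xt ord0).

(* Main.v *)
Require Import Defs.
From HB Require Import structures.
From mathcomp Require Import all_boot all_order all_algebra.
From mathcomp Require Import all_classical all_reals all_analysis.
From mathcomp Require Import ring lra zify.
Import Order.TTheory GRing.Theory Num.Theory.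
Local Open Scope ring_scope.

Section Aux.
Variable R : realType.

Lemma sqnorm3_ge0 (v : 'rV[R]_3) : 0 <= sqnorm3 v.
Proof. by rewrite /sqnorm3; apply: sumr_ge0 => c _; rewrite sqr_ge0. Qed.

Lemma sqnorm3_diff (a b : 'rV[R]_3) :
  sqnorm3 (a - b) <= 2 * (sqnorm3 a + sqnorm3 b).
Proof.
rewrite /sqnorm3 -big_split /= mulr_sumr; apply: ler_sum => c _.
rewrite !mxE; set u := a 0 c; set w := b 0 c; have := sqr_ge0 (u + w); rewrite !expr2; nra.
Qed.

Lemma pow_ge1 (a beta : R) : 1 <= a -> 0 <= beta -> 1 <= a `^ beta.
Proof. by move=> a1 b0; rewrite -(powRr0 a) ler_powR. Qed.

Lemma pow_mono (a b beta : R) : 0 <= a -> a <= b -> 0 <= beta -> a `^ beta <= b `^ beta.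
Proof.
move=> a0 ab b0; apply: (ge0_ler_powR b0) => //; rewrite nnegrE //.
exact: le_trans ab.
Qed.
End Aux.

Theorem proposition2 (R : realType) (k : nat) (H beta h B : R)
  (L : 'I_k.+1 -> {set 'I_k.+1}) (xt : nat -> 'I_k.+1 -> 'rV[R]_3) :
  (1 <= k)%N -> 0 < H -> 0 < beta -> 0 < h ->
  hier_leaders L ->
  0 <= B -> (forall n : nat, reduced_sqnorm (xt n) <= B) ->
  h < 1 / (2 * k%:R * H) ->
  forall n : nat,
    (forall i j : 'I_k, 0 <= Smat L H beta h (xt n) i j) /\
    (forall i j : 'I_k,
       Smat L H beta h (xt n) i j <= 1 - h * (H / (1 + B) `^ beta)).
Proof.
move=> k1 H0 b0 h0 [Llt Lne] B0 Hred hlt n.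
set x := xt n.
have k0 : (1 <= k%:R :> R) by rewrite ler1n.
have hkH : h * (k%:R * H) < 1 / 2.
  have p : 0 < 2 * k%:R * H by apply: mulr_gt0 => //; lra.
  have := hlt; rewrite -(ltr_pM2r p) divfK ?gt_eqF // => e.
  have eq2 : h * (2 * k%:R * H) = 2 * (h * (k%:R * H)) by ring.
  lra.
have hH : h * H < 1 / 2.
  apply: le_lt_trans hkH; rewrite ler_pM2l // ler_peMl //; exact: ltW.
set dst := H / (1 + B) `^ beta.
have pB1 : 1 <= (1 + B) `^ beta by apply: pow_ge1; lra.
have dst0 : 0 < dst by rewrite divr_gt0 // (lt_le_trans ltr01).
have dstH : dst <= H by rewrite ler_pdivrMr ?(lt_le_trans ltr01) // ler_peMr // ltW.
have aw_b : forall i j, 0 <= aw L H beta x i j <= H.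
  move=> i j; rewrite /aw; case: ifP => _; last by rewrite lexx ltW.
  have p1 : 1 <= (1 + sqnorm3 (x j - x i) / 2) `^ beta.
    apply: pow_ge1; last exact: ltW.
    have := @sqnorm3_ge0 R (x j - x i); lra.
  apply/andP; split; first by rewrite divr_ge0 ?powR_ge0 // ltW.
  by rewrite ler_pdivrMr ?(lt_le_trans ltr01) // ler_peMr // ltW.
have dw_b : forall i : 'I_k, 0 <= dw L H beta x (lift ord0 i) <= k%:R * H.
  move=> i; rewrite /dw; apply/andP; split.
    by apply: sumr_ge0 => j _; case/andP: (aw_b (lift ord0 i) j).
  apply: (@le_trans _ _ (\sum_(j in L (lift ord0 i)) H)).
    by apply: ler_sum => j _; case/andP: (aw_b (lift ord0 i) j).
  rewrite sumr_const -[H *+ _]mulr_natl ler_pM2r // ler_nat.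
  have sub : L (lift ord0 i) \subset finset.setC (finset.set1 (@ord_max k)).
    apply/fintype.subsetP => j /Llt jl; rewrite !inE; apply/eqP => je.
    move: jl; rewrite je /= /bump /=; have := ltn_ord i; lia.
  by have := subset_leq_card sub; rewrite cardsC1 card_ord.
have dw_lb : forall i : 'I_k, dst <= dw L H beta x (lift ord0 i).
  move=> i; have /finset.set0Pn [j jL] : L (lift ord0 i) != finset.set0 by apply: Lne.
  rewrite /dw (bigD1 j) //= -[dst]addr0; apply: lerD; last first.
    by apply: sumr_ge0 => l _; case/andP: (aw_b (lift ord0 i) l).
  rewrite /aw jL /dst ler_pM2l //.
  set s := sqnorm3 _.
  have s00 : 0 <= s by apply: sqnorm3_ge0.
  rewrite lef_pV2 ?posrE ?powR_gt0 //; last 2 first.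
    lra.
    have : 0 <= s / 2 by rewrite divr_ge0. lra.
  have sB : s / 2 <= B.
    have jlt := Llt _ _ jL.
    have red := Hred n; rewrite -/x /reduced_sqnorm in red.
    have si : 0 <= s by apply: sqnorm3_ge0.
    case: (unliftP ord0 j) => [j'|] ej; last first.
      have es : s = sqnorm3 (x ord0 - x (lift ord0 i)) by rewrite /s ej.
      rewrite (bigD1 i) //= in red.
      have : 0 <= \sum_(l < k | l != i) sqnorm3 (x (lift ord0 l) - x ord0) by apply: sumr_ge0 => l _; apply: sqnorm3_ge0.
      have e2 : sqnorm3 (x ord0 - x (lift ord0 i)) = sqnorm3 (x (lift ord0 i) - x ord0).
        by rewrite /sqnorm3; apply: eq_bigr => c _; rewrite !mxE; ring.
      rewrite es e2; lra.
    have ji : j' != i.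
      apply/eqP => e; move: jlt; rewrite ej e ltnn //.
    rewrite (bigD1 i) //= (bigD1 j') //= in red.
    have : 0 <= \sum_(l < k | (l != i) && (l != j')) sqnorm3 (x (lift ord0 l) - x ord0) by apply: sumr_ge0 => l _; apply: sqnorm3_ge0.
    have := @sqnorm3_diff R (x (lift ord0 j') - x ord0) (x (lift ord0 i) - x ord0).
    have -> : x (lift ord0 j') - x ord0 - (x (lift ord0 i) - x ord0) = x j - x (lift ord0 i).
      by rewrite ej; apply/matrixP => a c; rewrite !mxE; lra.
    rewrite -/s; lra.
  have s0 : 0 <= s / 2 by rewrite divr_ge0 // sqnorm3_ge0.
  apply: pow_mono; [lra | lra | exact: ltW].
split => i j; rewrite /Smat /Lmat !mxE.
  case: eqP => [->|ne]; rewrite ?eqxx /=.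
    have := dw_b j; move=> /andP[a b]; have : h * dw L H beta x (lift ord0 j) <= h * (k%:R * H) by rewrite ler_pM2l.
    lra.
  rewrite add0r; case: ifP => _; last by rewrite mulr0 oppr0.
  case/andP: (aw_b (lift ord0 i) (lift ord0 j)) => a b.
  rewrite mulrN opprK; exact: mulr_ge0 (ltW h0) a.
have hd : h * dst <= h * H by rewrite ler_pM2l.
case: eqP => [->|ne]; rewrite ?eqxx /=.
  have : h * dst <= h * dw L H beta x (lift ord0 j) by rewrite ler_pM2l.
  rewrite -/dst; lra.
rewrite add0r -/dst; case: ifP => _; last first.
  rewrite mulr0 oppr0; have : 0 < h * dst by apply: mulr_gt0. lra.
case/andP: (aw_b (lift ord0 i) (lift ord0 j)) => a b.
have : h * aw L H beta x (lift ord0 i) (lift ord0 j) <= h * H by rewrite ler_pM2l.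
rewrite mulrN opprK; lra.
Qed.
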